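(* Let $\mathcal T\ge2$, $\mathcal S\ge\max\{2\mathcal T,6\}$, and $(t,x)\in\mathbb R\times\mathbb R^3$ with $|t-|x||\le1$ and $|x|\ge\max\{12,\mathcal T,2\mathcal S\}$. Then $$\int_{|x-y|\le t+\mathcal T}\frac{dy}{|x-y||y|^4}\mathbf 1_{\{|y|\ge\frac12(1+|t-|x-y||)\}}\le C(1+\mathcal T)\frac{1}{|x|},$$ with $C$ an absolute constant. *)

(* Defs.v *)
From HB Require Import structures.
From mathcomp Require Import all_boot all_order all_algebra.
From mathcomp Require Import all_classical all_reals all_analysis.
Set Implicit Arguments. Unset Strict Implicit. Unset Printing Implicit Defensive.
Import Order.TTheory GRing.Theory Num.Theory.
Local Open Scope ring_scope.

Definition R3 (R : realType) : Type := ((R * R) * R)%type.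

Definition leb3 (R : realType) :=
  ((@lebesgue_measure R \x @lebesgue_measure R) \x @lebesgue_measure R)%E.

Definition norm3 (R : realType) (y : R * R * R) : R :=
  Num.sqrt (y.1.1 ^+ 2 + y.1.2 ^+ 2 + y.2 ^+ 2).

Definition sub3 (R : realType) (x y : R * R * R) : R * R * R :=
  ((x.1.1 - y.1.1, x.1.2 - y.1.2), x.2 - y.2).
Arguments leb3 R : clear implicits.

(* Main.v *)
Require Import Defs.
From HB Require Import structures.
From mathcomp Require Import all_boot all_order all_algebra.
From mathcomp Require Import all_classical all_reals all_analysis.
From mathcomp Require Import measurable_realfun.
From mathcomp Require Import ring lra.
Import Order.TTheory GRing.Theory Num.Theory.
Local Open Scope ring_scope.
Local Open Scope classical_set_scope.
Set Implicit Arguments. Unset Strict Implicit.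
Definition T3 (R : realType) := ltac:(let t := type of (leb3 R) in match t with set ?T -> _ => exact T end).
Section S.
Variable R : realType.
Definition Box (c : R * R * R) (r : R) : set (T3 R) :=
  (`[c.1.1 - r, c.1.1 + r] `*` `[c.1.2 - r, c.1.2 + r]) `*` `[c.2 - r, c.2 + r].

Lemma Box_meas c r : measurable (Box c r).
Proof. apply: measurableX. apply: measurableX. all: exact: measurable_itv. Qed.

Lemma Box_mu c r : 0 <= r -> leb3 R (Box c r) = ((2 * r) ^+ 3)%:E.
Proof.
move=> r0; rewrite /leb3 /Box.
rewrite product_measure1E; last 2 first.
  apply: measurableX; exact: measurable_itv. exact: measurable_itv.
rewrite [X in (X * _)%E](_ : _ = (lebesgue_measure [set` (`[c.1.1 - r, c.1.1 + r])%R] * lebesgue_measure [set` (`[c.1.2 - r, c.1.2 + r])%R])%E); last by apply: product_measure1E; exact: measurable_itv.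
rewrite [X in (_ * X)%E](_ : _ = lebesgue_measure [set` (`[c.2 - r, c.2 + r])%R]) //.
rewrite !lebesgue_measure_itv /=.
have [->|rp] := eqVneq r 0.
  by rewrite !subr0 !addr0 !ltxx !mul0e mulr0 expr0n.
have rp' : 0 < r by rewrite lt_neqAle eq_sym rp r0.
have h a : (a - r < a + r)%R by lra.
rewrite !lte_fin !h -!EFinD -!EFinM; congr EFin; ring.
Qed.

Lemma norm3_ge0 (y : R * R * R) : 0 <= norm3 y.
Proof. exact: sqrtr_ge0. Qed.

Lemma norm3_sq (y : R * R * R) : norm3 y ^+ 2 = y.1.1 ^+ 2 + y.1.2 ^+ 2 + y.2 ^+ 2.
Proof. by rewrite /norm3 sqr_sqrtr // !addr_ge0 // sqr_ge0. Qed.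

Lemma le_sqrt_abs (a S : R) : a ^+ 2 <= S -> `|a| <= Num.sqrt S.
Proof. by move=> h; rewrite -sqrtr_sqr; exact: ler_wsqrtr. Qed.

Lemma norm3_c1 (y : R * R * R) : `|y.1.1| <= norm3 y.
Proof. apply: le_sqrt_abs; have := sqr_ge0 y.1.2; have := sqr_ge0 y.2; lra. Qed.
Lemma norm3_c2 (y : R * R * R) : `|y.1.2| <= norm3 y.
Proof. apply: le_sqrt_abs; have := sqr_ge0 y.1.1; have := sqr_ge0 y.2; lra. Qed.
Lemma norm3_c3 (y : R * R * R) : `|y.2| <= norm3 y.
Proof. apply: le_sqrt_abs; have := sqr_ge0 y.1.2; have := sqr_ge0 y.1.1; lra. Qed.

Lemma inv_le (A B c : R) : 0 < A -> 0 < B -> B <= c * A -> A^-1 <= c / B.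
Proof.
move=> A0 B0 h; rewrite ler_pdivlMr //.
have : A^-1 * B <= A^-1 * (c * A) by rewrite ler_wpM2l // invr_ge0 ltW.
by rewrite mulrCA mulVf ?mulr1 // gt_eqF.
Qed.

Lemma split_norm (x y : R * R * R) :
  norm3 x ^+ 2 <= 2 * norm3 (sub3 x y) ^+ 2 + 2 * norm3 y ^+ 2.
Proof.
rewrite !norm3_sq /sub3 /=.
set a := x.1.1; set b := x.1.2; set c := x.2; set d := y.1.1; set e := y.1.2; set f := y.2.
have := sqr_ge0 (a - 2 * d); have := sqr_ge0 (b - 2 * e); have := sqr_ge0 (c - 2 * f).
rewrite !expr2 => h1 h2 h3. nra.
Qed.

Lemma pow2_gt0 n : 0 < (2 : R) ^+ n.
Proof. by rewrite exprn_gt0. Qed.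

Lemma pow2_gtn n : (n%:R : R) < 2 ^+ n.
Proof. by rewrite -natrX ltr_nat ltn_expl. Qed.


Lemma BoxP c r (y : R * R * R) : Box c r y <->
  [/\ `|y.1.1 - c.1.1| <= r, `|y.1.2 - c.1.2| <= r & `|y.2 - c.2| <= r].
Proof.
rewrite /Box /= !in_itv /= !ler_distl.
split; first by move=> [[-> ->] ->].
by move=> [-> -> ->].
Qed.

Definition aa (X : R) n : R := 512 / (X * (2 ^+ n) ^+ 4).
Definition BB n := Box ((0,0),0) (2 ^+ n / 2).

Lemma caseA (X w : R) (y : R * R * R) : 0 < X -> X <= 2 * w -> 1/2 <= norm3 y ->
  exists n, (w * norm3 y ^+ 4)^-1 <= aa X n * \1_(BB n) y.
Proof.
move=> X0 Xw uge.
set u := norm3 y.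
pose Pn n := [&& `|y.1.1| <= 2 ^+ n / 2, `|y.1.2| <= 2 ^+ n / 2 & `|y.2| <= 2 ^+ n / 2].
have exP : exists n, Pn n.
  exists (Num.bound u).+1.
  have hb := archi_boundP (norm3_ge0 y).
  have hp := pow2_gtn (Num.bound u).
  have e : (2 : R) ^+ (Num.bound u).+1 / 2 = 2 ^+ (Num.bound u) by rewrite exprS; field.
  rewrite /Pn e.
  have := norm3_c1 y; have := norm3_c2 y; have := norm3_c3 y.
  rewrite -/u => h1 h2 h3.
  rewrite -/u in hb; apply/and3P; split; lra.
case: (ex_minnP exP) => n Pn_n minn.
exists n.
have inB : \1_(BB n) y = 1 :> R.
  rewrite indicE mem_set //; apply/BoxP => /=; rewrite !subr0.
  by case/and3P: Pn_n.
rewrite inB mulr1.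
have p0 := pow2_gt0 n.
have ule : 2 ^+ n / 4 <= u.
  case: n Pn_n minn inB p0 => [|k] Pn_n minn inB p0.
    rewrite expr0. rewrite -/u in uge. lra.
  have nP : ~~ Pn k.
    apply/negP => /minn; rewrite ltnn //.
  have e : (2 : R) ^+ k.+1 / 4 = 2 ^+ k / 2 by rewrite exprS; field.
  rewrite e.
  have := norm3_c1 y; have := norm3_c2 y; have := norm3_c3 y.
  rewrite -/u => h1 h2 h3.
  move: nP; rewrite /Pn !negb_and -!ltNge => /or3P [] h; lra.
have u0 : 0 < u by lra.
rewrite /aa; apply: inv_le.
- by rewrite mulr_gt0 // ?exprn_gt0 //; lra.
- by rewrite mulr_gt0 // exprn_gt0.
have h4 : (2 ^+ n) ^+ 4 <= 256 * u ^+ 4.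
  have -> : (256 : R) * u ^+ 4 = (4 * u) ^+ 4 by rewrite exprMn; congr (_ * _); rewrite -natrX.
  by rewrite lerXn2r // ?nnegrE; lra.
have w0 : 0 <= w by lra.
have : X * (2 ^+ n) ^+ 4 <= (2 * w) * (256 * u ^+ 4).
  apply: ler_pM; [lra | by rewrite exprn_ge0 // ltW | lra | exact: h4].
move=> h; apply: le_trans h _; rewrite le_eqVlt; apply/orP; left; apply/eqP; ring.
Qed.

Lemma sq_le (a c : R) : `|a| <= c -> a ^+ 2 <= c ^+ 2.
Proof.
move=> h; rewrite -real_normK ?num_real // !expr2; apply: ler_pM => //; exact: normr_ge0.
Qed.

Definition bb (X : R) n : R := 16 * 2 ^+ n.+1 / (X ^+ 4 * (3 * X)).
Definition PP (x : R * R * R) n := Box x (3 * norm3 x / 2 ^+ n).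

Lemma caseB (x y : R * R * R) : 0 < norm3 x -> norm3 x <= 2 * norm3 y ->
  0 < norm3 (sub3 x y) -> norm3 (sub3 x y) <= 3 * norm3 x ->
  exists n, (norm3 (sub3 x y) * norm3 y ^+ 4)^-1 <= bb (norm3 x) n * \1_(PP x n) y.
Proof.
set X := norm3 x; set w := norm3 (sub3 x y); set u := norm3 y.
move=> X0 Xu w0 wX.
have hz1 := norm3_c1 (sub3 x y); have hz2 := norm3_c2 (sub3 x y);
have hz3 := norm3_c3 (sub3 x y); have wsq := norm3_sq (sub3 x y).
rewrite -/w in hz1 hz2 hz3 wsq.
move: hz1 hz2 hz3 wsq; rewrite /sub3 /=.
set z1 := x.1.1 - y.1.1; set z2 := x.1.2 - y.1.2; set z3 := x.2 - y.2.
move=> hz1 hz2 hz3 wsq.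
pose Q n := [&& `|z1| <= 3 * X / 2 ^+ n, `|z2| <= 3 * X / 2 ^+ n & `|z3| <= 3 * X / 2 ^+ n].
have exQ : exists n, ~~ Q n.
  exists (Num.bound (6 * X / w)).
  set k := Num.bound (6 * X / w).
  have hb : 6 * X / w < k%:R by apply: archi_boundP; rewrite divr_ge0 //; lra.
  have hp := pow2_gtn k.
  have pk := pow2_gt0 k.
  have hlt : 3 * X / 2 ^+ k < w / 2.
    rewrite ltr_pdivrMr // mulrAC ltr_pdivlMr //.
    have : 6 * X < k%:R * w by rewrite -ltr_pdivrMr.
    have : k%:R * w <= 2 ^+ k * w by rewrite ler_pM2r // ltW.
    lra.
  apply/negP => /and3P [h1 h2 h3].
  have e1 := sq_le (le_trans h1 (ltW hlt)).
  have e2 := sq_le (le_trans h2 (ltW hlt)).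
  have e3 := sq_le (le_trans h3 (ltW hlt)).
  have : w ^+ 2 <= 3 * (w / 2) ^+ 2 by rewrite wsq; lra.
  rewrite expr_div_n; have : 0 < w ^+ 2 by rewrite exprn_gt0.
  lra.
case: (ex_minnP exQ) => k nQk mink.
have Q0 : Q 0.
  rewrite /Q expr0 divr1; apply/and3P; split; lra.
case: k nQk mink => [|m] nQk mink.
  by rewrite Q0 in nQk.
have Qm : Q m.
  apply/negPn/negP => /mink; rewrite ltnn //.
exists m.
have inP : \1_(PP x m) y = 1 :> R.
  rewrite indicE mem_set //; apply/BoxP.
  case/and3P: Qm; rewrite -/X /z1 /z2 /z3 => h1 h2 h3.
  by split; rewrite distrC.
rewrite inP mulr1.
have q0 := pow2_gt0 m.+1.
have wq : 3 * X <= 2 ^+ m.+1 * w.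
  have : 3 * X / 2 ^+ m.+1 < w.
    move: nQk; rewrite /Q !negb_and -!ltNge => /or3P [] h.
    - exact: lt_le_trans h hz1.
    - exact: lt_le_trans h hz2.
    - exact: lt_le_trans h hz3.
  by rewrite ltr_pdivrMr // [w * _]mulrC => hh; apply: ltW.
have u0 : 0 < u by lra.
rewrite /bb; apply: inv_le.
- by rewrite mulr_gt0 // exprn_gt0.
- by rewrite mulr_gt0 ?exprn_gt0 //; lra.
have h4 : X ^+ 4 <= 16 * u ^+ 4.
  have -> : (16 : R) * u ^+ 4 = (2 * u) ^+ 4 by rewrite exprMn; congr (_ * _); rewrite -natrX.
  by rewrite lerXn2r // ?nnegrE; lra.
have : X ^+ 4 * (3 * X) <= (16 * u ^+ 4) * (2 ^+ m.+1 * w).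
  apply: ler_pM; [by rewrite exprn_ge0 // ltW | lra | exact: h4 | exact: wq].
move=> h; apply: le_trans h _; rewrite le_eqVlt; apply/orP; left; apply/eqP; ring.
Qed.

Lemma term_bound (X : R) n : 1 <= X ->
  aa X n * (2 * (2 ^+ n / 2)) ^+ 3 + bb X n * (2 * (3 * X / 2 ^+ n)) ^+ 3
  <= 2816 / X * (2 ^+ n)^-1.
Proof.
move=> X1.
have p0 := pow2_gt0 n; have p1 : 1 <= (2 : R) ^+ n by rewrite exprn_ege1 // ler1n.
set p := (2 : R) ^+ n in p0 p1 *.
have X0 : 0 < X by lra.
have Xn : X != 0 by rewrite gt_eqF.
have pn : p != 0 by rewrite gt_eqF.
have e1 : aa X n * (2 * (p / 2)) ^+ 3 = 512 / X * p^-1.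
  rewrite /aa -/p; field. by rewrite Xn pn.
have e2 : bb X n * (2 * (3 * X / p)) ^+ 3 = 2304 / (X * p) * (X * p)^-1.
  rewrite /bb exprS -/p; field. by rewrite Xn pn.
rewrite e1 e2.
have Xp1 : 1 <= X * p by rewrite -[1]mulr1; apply: ler_pM.
have h : (X * p)^-1 <= 1.
  by rewrite invr_le1 ?unitfE ?mulf_neq0 // ?mulr_gt0.
have h2 : 2304 / (X * p) * (X * p)^-1 <= 2304 / (X * p).
  apply: ler_piMr; last exact: h.
  apply: divr_ge0; [exact: ler0n | exact: ltW (mulr_gt0 X0 p0)].
have e3 : 2304 / (X * p) = 2304 / X * p^-1 by rewrite invfM mulrA.
have e4 : 2816 / X * p^-1 = 512 / X * p^-1 + 2304 / X * p^-1.
  field. by rewrite Xn pn.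
by rewrite e4 -e3 lerD2l.
Qed.

Lemma geom N : \sum_(0 <= n < N) ((2 : R) ^+ n)^-1 = 2 - 2 * (2 ^+ N)^-1.
Proof.
elim: N => [|N IH]; first by rewrite big_nil expr0 invr1; ring.
rewrite big_nat_recr //= IH exprS.
have := pow2_gt0 N => hp.
have hn : (2 : R) ^+ N != 0 by rewrite gt_eqF.
field. by rewrite hn.
Qed.

Lemma sum_bound (X : R) N : 1 <= X ->
  \sum_(0 <= n < N) (aa X n * (2 * (2 ^+ n / 2)) ^+ 3 + bb X n * (2 * (3 * X / 2 ^+ n)) ^+ 3)
  <= 5632 / X.
Proof.
move=> X1.
have hs : \sum_(0 <= n < N) (aa X n * (2 * (2 ^+ n / 2)) ^+ 3 + bb X n * (2 * (3 * X / 2 ^+ n)) ^+ 3)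
   <= \sum_(0 <= n < N) (2816 / X * (2 ^+ n)^-1).
  by apply: ler_sum => n _; exact: term_bound.
apply: le_trans hs _.
rewrite -mulr_sumr geom.
have X0 : 0 < X by lra.
have hp := pow2_gt0 N.
have hb : 0 <= 2 * (2 ^+ N)^-1 :> R.
  apply: mulr_ge0; [exact: ler0n | rewrite invr_ge0; exact: ltW].
have ha : 0 < 2816 / X.
  apply: divr_gt0; [rewrite ltr0n; exact: isT | exact: X0].
have Xn : X != 0 by rewrite gt_eqF.
have -> : 5632 / X = 2816 / X * 2 by field; rewrite Xn.
have := mulr_ge0 (ltW ha) hb.
rewrite mulrBr. lra.
Qed.
Lemma aa_ge0 X n : 0 < X -> 0 <= aa X n.
Proof.
move=> X0; apply: divr_ge0; first exact: ler0n.
apply: mulr_ge0; first exact: ltW.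
apply: exprn_ge0; exact: ltW (pow2_gt0 n).
Qed.

Lemma bb_ge0 X n : 0 < X -> 0 <= bb X n.
Proof.
move=> X0; apply: divr_ge0.
  apply: mulr_ge0; [exact: ler0n | exact: ltW (pow2_gt0 _)].
apply: mulr_ge0; first exact: exprn_ge0 (ltW X0).
apply: mulr_ge0; [exact: ler0n | exact: ltW].
Qed.

Lemma int_mono (f g : T3 R -> \bar R) : (forall y, 0 <= f y)%E -> (forall y, f y <= g y)%E ->
  (\int[leb3 R]_y f y <= \int[leb3 R]_y g y)%E.
Proof.
move=> f0 fg.
have g0 : forall y, (0 <= g y)%E by move=> y; exact: le_trans (f0 y) (fg y).
rewrite !ge0_integralTE //; apply: le_ereal_sup => _ [h /= hf <-].
exists h => //= y; exact: le_trans (hf y) (fg y).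
Qed.

Lemma int_le_series (f : T3 R -> \bar R) (a b : nat -> R) (B P : nat -> set (T3 R)) M :
 (forall y, 0 <= f y)%E -> (forall n, 0 <= a n) -> (forall n, 0 <= b n) ->
 (forall n, measurable (B n)) -> (forall n, measurable (P n)) ->
 (forall y, f y <= \sum_(n <oo) ((a n * \1_(B n) y + b n * \1_(P n) y)%:E))%E ->
 (forall N, \sum_(0 <= n < N) ((a n)%:E * leb3 R (B n) + (b n)%:E * leb3 R (P n)) <= M)%E ->
 (\int[leb3 R]_y f y <= M)%E.
Proof.
move=> f0 a0 b0 mB mP fle sumle.
apply: le_trans (int_mono f0 fle) _.
have t0 n y : (0 <= (a n * \1_(B n) y + b n * \1_(P n) y)%:E)%E.
  by rewrite lee_fin addr_ge0 // mulr_ge0.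
have mt n : measurable_fun setT (fun y : T3 R => ((a n * \1_(B n) y + b n * \1_(P n) y)%:E : \bar R)).
  apply/measurable_EFinP; apply: measurable_funD; apply: measurable_funM => //;
  exact: measurable_indic.
rewrite integral_nneseries //.
have eqn n : (\int[leb3 R]_y ((a n * \1_(B n) y + b n * \1_(P n) y)%:E)
   = (a n)%:E * leb3 R (B n) + (b n)%:E * leb3 R (P n))%E.
  under eq_integral do rewrite EFinD.
  rewrite ge0_integralD //; last 4 first.
  - by move=> y _; rewrite lee_fin mulr_ge0.
  - by apply/measurable_EFinP; apply: measurable_funM => //; exact: measurable_indic.
  - by move=> y _; rewrite lee_fin mulr_ge0.
  - by apply/measurable_EFinP; apply: measurable_funM => //; exact: measurable_indic.
  rewrite (integralZl_indic measurableT (fun=> B n)) //; last by move=> /lt_le_trans /(_ (a0 n)); rewrite ltxx.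
  rewrite (integralZl_indic measurableT (fun=> P n)) //; last by move=> /lt_le_trans /(_ (b0 n)); rewrite ltxx.
  by rewrite !integral_indic // !setIT.
under eq_eseriesr do rewrite eqn.
apply: lime_le.
  apply: is_cvg_nneseries => n _ _; rewrite -eqn; apply: integral_ge0 => y _; exact: t0.
by apply: nearW => N; exact: sumle.
Qed.
End S.
Arguments BB {R} n.

Unset Implicit Arguments. Set Strict Implicit.
Local Close Scope classical_set_scope.
Local Open Scope ring_scope.

Theorem lemmaE11 (R : realType) :
  exists C : R, 0 < C /\
  forall (T S t : R) (x : R * R * R),
    2 <= T -> Num.max (2 * T) 6 <= S ->
    `| t - norm3 x | <= 1 ->
    Num.max 12 (Num.max T (2 * S)) <= norm3 x ->
    (\int[leb3 R]_(y in [set y : R * R * R | (norm3 (sub3 x y) <= t + T)%R])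
        (((norm3 (sub3 x y) * norm3 y ^+ 4)^-1
          * (if 2^-1 * (1 + `| t - norm3 (sub3 x y) |) <= norm3 y then 1 else 0))%R%:E)
     <= (C * (1 + T) / norm3 x)%R%:E)%E.
Proof.
exists 5632; split; first by rewrite ltr0n.
move=> T S t x hT hS ht hx.
move: hx; rewrite !ge_max => /and3P [hX12 hTX _].
set X := norm3 x in hX12 hTX ht *.
have X0 : 0 < X by lra.
have X1 : 1 <= X by lra.
move: ht; rewrite ler_distl => /andP [ht1 ht2].
have ha n y : 0 <= aa X n * \1_(BB n) y.
  by apply: mulr_ge0; [exact: aa_ge0 | rewrite indicE; exact: ler0n].
have hb n y : 0 <= bb X n * \1_(PP x n) y.
  by apply: mulr_ge0; [exact: bb_ge0 | rewrite indicE; exact: ler0n].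
have t0 n y : (0 <= (aa X n * \1_(BB n) y + bb X n * \1_(PP x n) y)%:E)%E.
  by rewrite lee_fin; exact: addr_ge0.
rewrite integral_mkcond.
apply: (@int_le_series R _ (aa X) (bb X) BB (PP x)).
- move=> y; rewrite patchE; case: ifPn => [_|_]; last exact: lexx.
  rewrite lee_fin; apply: mulr_ge0.
    by rewrite invr_ge0; apply: mulr_ge0; [exact: norm3_ge0 | exact: exprn_ge0 (norm3_ge0 _)].
  by case: ifP => _; [exact: ler01 | exact: lexx].
- by move=> n; exact: aa_ge0.
- by move=> n; exact: bb_ge0.
- by move=> n; exact: Box_meas.
- by move=> n; exact: Box_meas.
- move=> y; rewrite patchE; case: ifPn => [|_]; last first.
    by apply: nneseries_ge0 => n _ _; exact: t0.
  rewrite inE /= => yD.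
  suff [n hn] : exists n, ((norm3 (sub3 x y) * norm3 y ^+ 4)^-1
          * (if 2^-1 * (1 + `| t - norm3 (sub3 x y) |) <= norm3 y then 1 else 0))
          <= aa X n * \1_(BB n) y + bb X n * \1_(PP x n) y.
    apply: le_trans (_ : _ <= (aa X n * \1_(BB n) y + bb X n * \1_(PP x n) y)%:E)%E _.
      by rewrite lee_fin.
    rewrite (@nneseriesD1 R _ n xpredT); [|by move=> k _; exact: t0|by []].
    apply: leeDl; apply: nneseries_ge0 => k _ _; exact: t0.
  set w := norm3 (sub3 x y) in yD *.
  set u := norm3 y.
  have w0 : 0 <= w by exact: norm3_ge0.
  have u0 : 0 <= u by exact: norm3_ge0.
  case: ifPn => [ind|_]; last by exists 0%N; rewrite mulr0; exact: addr_ge0.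
  rewrite mulr1.
  have [w00|wn0] := eqVneq w 0.
    by exists 0%N; rewrite w00 mul0r invr0; exact: addr_ge0.
  have wp : 0 < w by rewrite lt_neqAle eq_sym wn0 w0.
  have uh : 1/2 <= u.
    have := normr_ge0 (t - w); lra.
  have sp := split_norm x y; rewrite -/X -/w -/u in sp.
  have [Xw|Xw] := leP X (2 * w).
    have [n hn] := caseA X0 Xw uh.
    by exists n; apply: le_trans hn _; rewrite lerDl.
  have Xu : X <= 2 * u.
    rewrite leNgt; apply/negP => Xu.
    have h1 : (2 * w) ^+ 2 < X ^+ 2.
      by rewrite ltrXn2r ?nnegrE; try lra; by [].
    have h2 : (2 * u) ^+ 2 < X ^+ 2.
      by rewrite ltrXn2r ?nnegrE; try lra; by [].
    move: h1 h2; rewrite !exprMn; lra.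
  have wX : w <= 3 * X by lra.
  have [n hn] := caseB X0 Xu wp wX.
  by exists n; apply: le_trans hn _; rewrite lerDr.
- move=> N.
  have e n : ((aa X n)%:E * leb3 R (BB n) + (bb X n)%:E * leb3 R (PP x n))%E
     = (aa X n * (2 * (2 ^+ n / 2)) ^+ 3 + bb X n * (2 * (3 * X / 2 ^+ n)) ^+ 3)%:E.
    have r1 : 0 <= (2 : R) ^+ n / 2 := divr_ge0 (ltW (pow2_gt0 R n)) (ler0n _ 2).
    have r2 : 0 <= 3 * X / 2 ^+ n := divr_ge0 (mulr_ge0 (ler0n _ 3) (ltW X0)) (ltW (pow2_gt0 R n)).
    rewrite /BB /PP !Box_mu; try exact: r1; try exact: r2.
    by rewrite -!EFinM -EFinD.
  under eq_bigr do rewrite e.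
  rewrite sumEFin lee_fin.
  apply: le_trans (sum_bound N X1) _.
  rewrite mulrAC; apply: ler_peMr; last by lra.
  apply: divr_ge0; [exact: ler0n | exact: ltW].
Qed.
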